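(* Let $n\ge3$ be an integer, $a\ge1$ real, and $x_0\in(0,\pi)$ with $S_{n,a}(x_0)=S_{n-2,a}(x_0)$. Then $a=1$ and $\phi_n(x_0)=0$.
   Context: For a real number $a$ and integers $0\le m$, $\binom{m+a}{m}=\frac{(a+1)(a+2)\cdots(a+m)}{m!}$ (equal to $1$ when $m=0$). For an integer $n\ge1$, $S_{n,a}(x)=\sum_{j=1}^n\binom{n+a-j}{n-j}\sin(jx)$, and $\phi_n(x)=2\sum_{j=1}^{n-1}\sin(jx)+\sin(nx)$. *)

(* Defs.v *)
From Stdlib Require Import Reals Arith Factorial.
Open Scope R_scope.

(* gbinom a m = binom(m+a, m) = (a+1)(a+2)...(a+m)/m!  (= 1 when m = 0) *)
Fixpoint rising_prod (a : R) (m : nat) : R :=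
  match m with
  | O => 1
  | S k => rising_prod a k * (a + INR (S k))
  end.

Definition gbinom (a : R) (m : nat) : R := rising_prod a m / INR (fact m).

Fixpoint sum1 (n : nat) (f : nat -> R) : R :=
  match n with
  | O => 0
  | S k => sum1 k f + f (S k)
  end.

Definition S_na (n : nat) (a x : R) : R :=
  sum1 n (fun j => gbinom a (n - j)%nat * sin (INR j * x)).

Definition phi (n : nat) (x : R) : R :=
  2 * sum1 (n - 1)%nat (fun j => sin (INR j * x)) + sin (INR n * x).

(* Main.v *)
Require Import Defs.
From Stdlib Require Import Reals.
From Stdlib Require Import Lra Lia Arith Factorial.
Open Scope R_scope.

Lemma sum1_S n f : sum1 (S n) f = sum1 n f + f (S n).
Proof. reflexivity. Qed.

Lemma sum1_ext n f g : (forall j, (1 <= j <= n)%nat -> f j = g j) -> sum1 n f = sum1 n g.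
Proof.
  induction n as [|n IH]; intros H; [reflexivity|].
  rewrite !sum1_S, IH, H; [reflexivity|lia|intros; apply H; lia].
Qed.

Lemma sum1_plus n f g : sum1 n (fun j => f j + g j) = sum1 n f + sum1 n g.
Proof. induction n as [|n IH]; simpl; [ring|rewrite IH; ring]. Qed.

Lemma sum1_minus n f g : sum1 n (fun j => f j - g j) = sum1 n f - sum1 n g.
Proof. induction n as [|n IH]; simpl; [ring|rewrite IH; ring]. Qed.

Lemma sum1_shift n g : sum1 (S n) g = g 1%nat + sum1 n (fun i => g (S i)).
Proof.
  induction n as [|n IH]; [simpl; ring|].
  rewrite sum1_S, IH, sum1_S; ring.
Qed.

Lemma sum1_nonneg n g : (forall j, (1 <= j <= n)%nat -> 0 <= g j) -> 0 <= sum1 n g.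
Proof.
  induction n as [|n IH]; intros H; simpl; [lra|].
  assert (0 <= sum1 n g) by (apply IH; intros; apply H; lia).
  assert (0 <= g (S n)) by (apply H; lia). lra.
Qed.

Lemma conv (c b f : nat -> R) : c 0%nat = b 0%nat -> (forall m, c (S m) = c m + b (S m)) ->
  forall n, sum1 n (fun j => c (n - j)%nat * f j) = sum1 n (fun i => b (n - i)%nat * sum1 i f).
Proof.
  intros H0 HS n. induction n as [|n IH]; [reflexivity|].
  rewrite sum1_S.
  rewrite (sum1_ext n _ (fun j => c (n - j)%nat * f j + b (S n - j)%nat * f j)).
  2:{ intros j Hj. replace (S n - j)%nat with (S (n - j)) by lia. rewrite HS. ring. }
  rewrite sum1_plus, IH.
  rewrite (sum1_shift n (fun i => b (S n - i)%nat * sum1 i f)).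
  change (fun i => b (S n - S i)%nat * sum1 (S i) f) with
    (fun i => b (n - i)%nat * (sum1 i f + f (S i))).
  rewrite (sum1_ext n (fun i => b (n - i)%nat * (sum1 i f + f (S i)))
     (fun i => b (n - i)%nat * sum1 i f + b (n - i)%nat * f (S i))) by (intros; ring).
  rewrite sum1_plus.
  pose proof (sum1_shift n (fun j => b (S n - j)%nat * f j)) as Hs.
  rewrite sum1_S in Hs. cbn beta in Hs.
  replace (S n - S n)%nat with 0%nat in Hs by lia.
  replace (S n - 1)%nat with n by lia.
  replace (S n - S n)%nat with 0%nat by lia.
  change (fun i => b (S n - S i)%nat * f (S i)) with (fun i => b (n - i)%nat * f (S i)) in Hs.
  rewrite H0. replace (S n - 1)%nat with n in Hs by lia. simpl sum1 at 4. lra.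
Qed.

Lemma rp_shift c m : rising_prod (c - 1) (S m) = c * rising_prod c m.
Proof.
  induction m as [|m IH]; [simpl; ring|].
  change (rising_prod (c-1) (S (S m))) with (rising_prod (c-1) (S m) * (c - 1 + INR (S (S m)))).
  rewrite IH. change (rising_prod c (S m)) with (rising_prod c m * (c + INR (S m))).
  rewrite (S_INR (S m)). ring.
Qed.

Lemma gbinom0 c : gbinom c 0 = 1.
Proof. unfold gbinom; simpl; field. Qed.

Lemma pascal c m : gbinom c (S m) = gbinom c m + gbinom (c - 1) (S m).
Proof.
  unfold gbinom. rewrite rp_shift.
  change (rising_prod c (S m)) with (rising_prod c m * (c + INR (S m))).
  change (fact (S m)) with (S m * fact m)%nat.
  rewrite mult_INR.
  assert (INR (fact m) <> 0) by (apply not_0_INR; apply fact_neq_0).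
  assert (INR (S m) <> 0) by (apply not_0_INR; lia).
  field; auto.
Qed.

Lemma rp_nonneg c k : -1 <= c -> 0 <= rising_prod c k.
Proof.
  intros Hc; induction k as [|k IH]; [simpl; lra|].
  change (rising_prod c (S k)) with (rising_prod c k * (c + INR (S k))).
  assert (1 <= INR (S k)) by (apply (le_INR 1); lia).
  apply Rmult_le_pos; lra.
Qed.

Lemma rp_pos c k : 0 <= c -> 0 < rising_prod c k.
Proof.
  intros Hc; induction k as [|k IH]; [simpl; lra|].
  change (rising_prod c (S k)) with (rising_prod c k * (c + INR (S k))).
  assert (1 <= INR (S k)) by (apply (le_INR 1); lia).
  apply Rmult_lt_0_compat; lra.
Qed.

Definition Dir (x : R) (k : nat) := sum1 k (fun j => sin (INR j * x)).
Definition DD (x : R) (k : nat) := sum1 k (Dir x).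

Lemma dir_closed x k : 2 * sin (x/2) * Dir x k = cos (x/2) - cos ((INR k + /2) * x).
Proof.
  induction k as [|k IH].
  - unfold Dir; simpl. replace ((0 + /2) * x) with (x/2) by field. ring.
  - unfold Dir in *. rewrite sum1_S.
    replace (2 * sin (x / 2) * (sum1 k (fun j => sin (INR j * x)) + sin (INR (S k) * x)))
      with (2 * sin (x / 2) * sum1 k (fun j => sin (INR j * x)) + 2 * sin (x/2) * sin (INR (S k) * x)) by ring.
    rewrite IH, S_INR.
    replace ((INR k + /2) * x) with ((INR k + 1) * x - x/2) by field.
    replace ((INR k + 1 + /2) * x) with ((INR k + 1) * x + x/2) by field.
    rewrite cos_minus, cos_plus. ring.
Qed.

Lemma pair_nonneg x k : 0 < x < PI -> 0 <= Dir x (S k) + Dir x k.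
Proof.
  intros [H1 H2].
  assert (Hs : 0 < sin (x/2)) by (apply sin_gt_0; lra).
  assert (Hc : 0 < cos (x/2)) by (apply cos_gt_0; lra).
  assert (E : 2 * sin (x/2) * (Dir x (S k) + Dir x k) = 2 * cos (x/2) * (1 - cos ((INR k + 1) * x))).
  { replace (2 * sin (x/2) * (Dir x (S k) + Dir x k)) with
      (2 * sin (x/2) * Dir x (S k) + 2 * sin (x/2) * Dir x k) by ring.
    rewrite !dir_closed, S_INR.
    replace ((INR k + /2) * x) with ((INR k + 1) * x - x/2) by field.
    replace ((INR k + 1 + /2) * x) with ((INR k + 1) * x + x/2) by field.
    rewrite cos_minus, cos_plus. ring. }
  pose proof (COS_bound ((INR k + 1) * x)) as [_ Hb].
  assert (0 <= 2 * sin (x/2) * (Dir x (S k) + Dir x k)) by (rewrite E; apply Rmult_le_pos; lra).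
  nra.
Qed.

Lemma Sform n a x : S_na n a x = sum1 n (fun i => gbinom (a - 1 - 1) (n - i)%nat * DD x i).
Proof.
  unfold S_na.
  rewrite (conv (gbinom a) (gbinom (a - 1)) (fun j => sin (INR j * x))); 
    [| rewrite !gbinom0; reflexivity | intros; apply pascal].
  change (fun i => sum1 i (fun j => sin (INR j * x))) with (Dir x).
  unfold DD.
  apply (conv (gbinom (a-1)) (gbinom (a-1-1)) (Dir x)); 
    [rewrite !gbinom0; reflexivity | intros; apply pascal].
Qed.

Theorem mainTheorem5 (n : nat) (a x0 : R) :
  (3 <= n)%nat -> 1 <= a -> 0 < x0 -> x0 < PI ->
  S_na n a x0 = S_na (n - 2)%nat a x0 ->
  a = 1 /\ phi n x0 = 0.
Proof.
  intros Hn Ha Hx1 Hx2 HS.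
  destruct n as [|[|[|q]]]; try lia.
  set (p := S q). 
  change (S (S (S q))) with (S (S p)) in *.
  change (S (S p) - 2)%nat with p in HS.
  rewrite !Sform in HS.
  set (b := gbinom (a - 1 - 1)) in HS.
  rewrite sum1_shift, sum1_shift in HS.
  change (fun i => b (S (S p) - S (S i))%nat * DD x0 (S (S i))) with
    (fun i => b (p - i)%nat * DD x0 (S (S i))) in HS.
  change (S (S p) - 1)%nat with (S p) in HS.
  change (S (S p) - 2)%nat with p in HS.
  assert (Hb : forall k, 0 <= b k).
  { intros k. unfold b, gbinom. apply Rmult_le_pos; [apply rp_nonneg; lra|].
    left; apply Rinv_0_lt_compat, lt_0_INR, lt_O_fact. }
  assert (HD : forall i, DD x0 (S (S i)) - DD x0 i = Dir x0 (S (S i)) + Dir x0 (S i)).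
  { intros i. unfold DD. rewrite !sum1_S. ring. }
  set (T := fun i => b (p - i)%nat * (Dir x0 (S (S i)) + Dir x0 (S i))).
  assert (HT : forall i, 0 <= T i).
  { intros i; unfold T; apply Rmult_le_pos; [apply Hb|apply pair_nonneg; lra]. }
  assert (Hsum : sum1 p (fun i => b (p - i)%nat * DD x0 (S (S i))) - sum1 p (fun i => b (p - i)%nat * DD x0 i) = sum1 p T).
  { rewrite <- sum1_minus. apply sum1_ext. intros j _. unfold T. rewrite <- HD. ring. }
  assert (HsT : T p <= sum1 p T).
  { unfold p at 2. rewrite sum1_S. 
    assert (0 <= sum1 q T) by (apply sum1_nonneg; intros; apply HT). unfold p. lra. }
  assert (HDD1 : DD x0 1 = sin x0).
  { unfold DD, Dir. simpl. rewrite Rmult_1_l. ring. }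
  assert (Hsin : 0 < sin x0) by (apply sin_gt_0; lra).
  assert (HDD2 : 0 <= DD x0 2).
  { unfold DD. rewrite !sum1_S. simpl sum1 at 1.
    pose proof (pair_nonneg x0 1 (conj Hx1 Hx2)). lra. }
  assert (H1 : 0 <= b (S p) * DD x0 1) by (apply Rmult_le_pos; [apply Hb | lra]).
  assert (H2 : 0 <= b p * DD x0 2) by (apply Rmult_le_pos; [apply Hb | lra]).
  assert (HTp : 0 <= T p) by apply HT.
  assert (Hz1 : b (S p) * DD x0 1 = 0) by lra.
  assert (Hz2 : T p = 0) by lra.
  split.
  - destruct (Req_dec a 1) as [E|E]; [exact E|exfalso].
    assert (Hpos : 0 < b (S p)).
    { unfold b, gbinom. rewrite rp_shift.
      apply Rmult_lt_0_compat; [apply Rmult_lt_0_compat; [lra | apply rp_pos; lra]|].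
      apply Rinv_0_lt_compat, lt_0_INR, lt_O_fact. }
    rewrite HDD1 in Hz1. nra.
  - unfold T in Hz2. rewrite Nat.sub_diag in Hz2. unfold b in Hz2. rewrite gbinom0 in Hz2.
    unfold phi. change (S (S p) - 1)%nat with (S p).
    unfold Dir in Hz2. rewrite sum1_S in Hz2. lra.
Qed.
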